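(* Let $\eta\in(0,1)$, $N_B\ge 0$, $N_{\rm coh}\ge 0$ and $r\in(0,1]$ be fixed, and for $\theta\in\mathbb{R}$ consider the single-mode Gaussian probe with first-moment vector $\mathbf{d}_S=\sqrt{2N_{\rm coh}}\,(\cos\theta,\sin\theta)^\top$ and covariance matrix $\boldsymbol{\Sigma}_S=\mathrm{diag}(r/2,\,1/(2r))$. Let $I^{\rm IF}_\eta(\theta)$ denote the quantum Fisher information of $\eta$ for the corresponding output state (defined in the context). Then $\theta\mapsto I^{\rm IF}_\eta(\theta)$ attains its maximum over $\mathbb{R}$ at $\theta=n\pi$ for every integer $n$.
   Context: Quadratures $\mathbf{R}=(q,p)^\top$ with $[R_i,R_j]=\mathrm{i}\Omega_{ij}$, $\boldsymbol\Omega=\begin{bmatrix}0&1\\-1&0\end{bmatrix}$; covariance matrix $\Sigma_{ij}=\tfrac12\langle R_iR_j+R_jR_i\rangle-\langle R_i\rangle\langle R_j\rangle$ (vacuum has $\boldsymbol\Sigma=\mathbb{I}_2/2$), first moments $d_i=\langle R_i\rangle$. The thermal lossy channel with transmission $\eta$ and thermal photon number $N_B$ (Heisenberg picture $a\mapsto \eta a+\sqrt{1-\eta^2}\,h$, $h$ thermal with $\langle h^\dagger h\rangle=N_B$) maps a Gaussian state with moments $(\mathbf d_S,\boldsymbol\Sigma_S)$ to the Gaussian state with $\tilde{\mathbf d}=\eta\mathbf d_S$ and $\tilde{\boldsymbol\Sigma}=\eta^2\boldsymbol\Sigma_S+y\,\mathbb{I}_2$, where $y=(1-\eta^2)(N_B+\tfrac12)$.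 The quantum Fisher information of $\eta$ for this single-mode Gaussian output is $I_\eta=\frac{\mathrm{Tr}\{(\tilde{\boldsymbol\Sigma}^{-1}\partial_\eta\tilde{\boldsymbol\Sigma})^2\}}{2(1+\mu^2)}+\frac{2(\partial_\eta\mu)^2}{1-\mu^4}+(\partial_\eta\tilde{\mathbf d})^\top\tilde{\boldsymbol\Sigma}^{-1}(\partial_\eta\tilde{\mathbf d})$, with purity $\mu=(4\det\tilde{\boldsymbol\Sigma})^{-1/2}$. *)

(* Defs.v *)
From Stdlib Require Import Reals.
From Coquelicot Require Import Coquelicot.
From mathcomp Require Import all_boot all_algebra.
From mathcomp Require Import Rstruct.

Set Implicit Arguments. Unset Strict Implicit. Unset Printing Implicit Defensive.
Import GRing.Theory.
Local Open Scope ring_scope.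

Definition ynoise (eta NB : R) : R := (1 - eta ^+ 2) * (NB + 2^-1).

(* Output moments of the thermal lossy channel *)
Definition out_d (eta : R) (dS : 'cV[R]_2) : 'cV[R]_2 := eta *: dS.
Definition out_Sigma (NB eta : R) (SigS : 'M[R]_2) : 'M[R]_2 :=
  eta ^+ 2 *: SigS + ynoise eta NB *: 1%:M.

Definition dmx (m n : nat) (F : R -> 'M[R]_(m, n)) (x : R) : 'M[R]_(m, n) :=
  \matrix_(i, j) Derive (fun e => F e i j) x.

Definition purity (S : 'M[R]_2) : R := (Num.sqrt (4 * \det S))^-1.

(* QFI formula for a single-mode Gaussian family (d(eta), Sigma(eta)) *)
Definition gaussQFI (d : R -> 'cV[R]_2) (Sig : R -> 'M[R]_2) (eta : R) : R :=
  let S := Sig eta in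
  let Si := invmx S in
  let dS := dmx Sig eta in
  let mu := purity S in
  let dmu := Derive (fun e => purity (Sig e)) eta in
  let dd := dmx d eta in
  \tr ((Si *m dS) *m (Si *m dS)) / (2 * (1 + mu ^+ 2))
  + 2 * dmu ^+ 2 / (1 - mu ^+ 4)
  + ((dd^T *m Si *m dd) 0 0).

Definition probe_d (Ncoh th : R) : 'cV[R]_2 :=
  \col_(i < 2) (Num.sqrt (2 * Ncoh) * (if i == 0 then cos th else sin th)).
Definition probe_Sigma (r : R) : 'M[R]_2 :=
  \matrix_(i < 2, j < 2)
    (if i == j then (if i == 0 then r / 2 else (2 * r)^-1) else 0).

Definition QFI_IF (eta NB Ncoh r th : R) : R :=
  gaussQFI (fun e => out_d e (probe_d Ncoh th))
           (fun e => out_Sigma NB e (probe_Sigma r)) eta.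

(* Main.v *)
Require Import Defs.
From Stdlib Require Import Reals.
From mathcomp Require Import all_boot all_algebra.
From mathcomp Require Import Rstruct.
From Coquelicot Require Coquelicot.
From mathcomp Require Import ring lra all_order.
Import Order.TTheory GRing.Theory Num.Theory.
Local Open Scope ring_scope.

Lemma dmx_out (v : 'cV[R]_2) x : dmx (fun e => out_d e v) x = v.
Proof.
apply/matrixP => i j; rewrite mxE.
rewrite (Coquelicot.Derive.Derive_ext _ (fun e => Rmult e (v i j))); last by move=> t; rewrite /out_d mxE.
by rewrite Coquelicot.Derive.Derive_scal_l Coquelicot.Derive.Derive_id Rmult_1_l.
Qed.

Lemma inv_diag (a b : R) : a != 0 -> b != 0 ->
  invmx (\matrix_(i < 2, j < 2) (if i == j then (if i == 0 then a else b) else 0))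
  = \matrix_(i < 2, j < 2) (if i == j then (if i == 0 then a^-1 else b^-1) else 0).
Proof.
move=> ha hb.
set S := \matrix_(i, j) _; set D := \matrix_(i, j) _.
have SD : S *m D = 1%:M.
  apply/matrixP => i j; rewrite !mxE big_ord_recr big_ord_recr big_ord0 !mxE.
  by case: i => [[|[|//]] ?]; case: j => [[|[|//]] ?] /=; rewrite ?mulr0 ?mul0r ?addr0 ?add0r ?divff.
have [uS _] := mulmx1_unit SD.
by rewrite -[invmx S]mulmx1 -SD mulmxA mulVmx // mul1mx.
Qed.

Lemma out_Sigma_diag NB e r : out_Sigma NB e (probe_Sigma r) =
  \matrix_(i < 2, j < 2) (if i == j then (if i == 0 then e^+2 * (r/2) + ynoise e NB
     else e^+2 * (2*r)^-1 + ynoise e NB) else 0).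
Proof.
apply/matrixP => i j; rewrite !mxE.
by case: i => [[|[|//]] ?]; case: j => [[|[|//]] ?] /=; rewrite ?mulr0 ?mulr1 ?addr0.
Qed.

Lemma qfi_split eta NB Ncoh r : exists K, forall th,
  QFI_IF eta NB Ncoh r th = K +
   ((probe_d Ncoh th)^T *m invmx (out_Sigma NB eta (probe_Sigma r)) *m probe_d Ncoh th) 0 0.
Proof.
eexists => th'; rewrite /QFI_IF /gaussQFI dmx_out; reflexivity.
Qed.

Lemma qf_diag (v : 'cV[R]_2) p q :
  (v^T *m (\matrix_(i < 2, j < 2) (if i == j then (if i == 0 then p else q) else 0)) *m v) 0 0
  = v 0 0 ^+ 2 * p + v 1 0 ^+ 2 * q.
Proof.
rewrite !mxE !(big_ord_recr, big_ord0) /= !mxE !(big_ord_recr, big_ord0) /= !mxE /=.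
rewrite ?add0r ?mulr0 ?mul0r ?addr0 ?add0r.
have -> : widen_ord (m:=2) (leqnSn 1) ord_max = 0 by apply/val_inj.
have -> : (ord_max : 'I_2) = 1 by apply/val_inj.
rewrite !expr2 -!mulrA [p * _]mulrC [q * _]mulrC.
by rewrite !mulrA.
Qed.

Lemma sin_int (n : int) : sin (n%:~R * PI) = 0.
Proof.
have H m : sin (m%:R * PI) = 0.
  apply: sin_eq_0_1; exists (Z.of_nat m); by rewrite -INR_IZR_INZ INRE.
case: n => m; first by rewrite -[(Posz m)%:~R]/(m%:R) H.
rewrite NegzE mulrNz -RoppE -Ropp_mult_distr_l sin_neg.
change (- sin (m.+1%:R * PI) = 0)%R. by rewrite H oppr0.
Qed.

Theorem lemma1 (eta NB Ncoh r : R) :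
  0 < eta -> eta < 1 -> 0 <= NB -> 0 <= Ncoh -> 0 < r -> r <= 1 ->
  forall (n : int) (th : R),
    QFI_IF eta NB Ncoh r th <= QFI_IF eta NB Ncoh r (n%:~R * PI).
Proof.
move=> he0 he1 hNB hN hr0 hr1 n th.
have [K HK] := qfi_split eta NB Ncoh r.
rewrite !HK lerD2l out_Sigma_diag.
set a := eta ^+ 2 * (r / 2) + ynoise eta NB.
set b := eta ^+ 2 * (2 * r)^-1 + ynoise eta NB.
have hy : 0 < ynoise eta NB.
  rewrite /ynoise mulr_gt0 //; first by rewrite subr_gt0 expr2 (lt_trans _ he1) // gtr_pMr.
  by rewrite ltr_wpDl // invr_gt0.
have ha : 0 < a by rewrite /a ltr_wpDl // mulr_ge0 // ?sqr_ge0 // divr_ge0 // ltW.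
have hab : a <= b.
  rewrite /a /b lerD2r ler_wpM2l ?sqr_ge0 //.
  rewrite -[(2*r)^-1]mul1r ler_pdivlMr ?mulr_gt0 //.
  have -> : r / 2 * (2 * r) = r * r by rewrite mulrA -(mulrA r) mulVf ?mulr1 // pnatr_eq0.
  by rewrite mulr_ile1 // ltW.
have hb : 0 < b by apply: lt_le_trans hab.
rewrite inv_diag ?gt_eqF // !qf_diag !mxE /=.
set k := Num.sqrt _.
have E x : cos x ^+ 2 = 1 - sin x ^+ 2.
  have := sin2_cos2 x; rewrite /Rsqr => H.
  move: H; rewrite RplusE !RmultE ?R1E => H.
  by rewrite -H !expr2; ring.
rewrite (_ : sin (n%:~R * PI) = 0); last exact: sin_int.
rewrite !exprMn !E expr0n /=.
rewrite (_ : sin (n%:~R * PI) = 0); last exact: sin_int.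
rewrite expr0n /=.
have hba : b^-1 <= a^-1 by rewrite lef_pV2 // posrE.
have key : 0 <= k ^+ 2 * sin th ^+ 2 * (a^-1 - b^-1).
  apply: mulr_ge0; first by rewrite mulr_ge0 ?sqr_ge0.
  by rewrite subr_ge0.
lra.
Qed.
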